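(* Let $k$ be a field and $Q,q\in k^\times$. Let $\mathcal P_{Q,q}=\bigoplus_{d\ge0}\mathcal P^d_{Q,q}$ and $\mathcal{AP}_q=\bigoplus_{d\ge0}\mathcal{AP}^d_q$ with the monoidal structure described below. Then $\mathcal{AP}_q$ acts on $\mathcal P_{Q,q}$ from the right via the functor $*$ described below (with the structure morphisms $\lambda$ and $\rho$ being identities on objects), i.e. $(\mathcal P_{Q,q},\mathcal{AP}_q,* )$ is an action pair.
   Context: Hecke algebras: $\mathcal H^B_{Q,q}(d)$ is generated by $T_0,\dots,T_{d-1}$ with relations $(T_0+Q)(T_0-Q^{-1})=0$; $(T_i+q)(T_i-q^{-1})=0$ ($i>0$); $T_iT_{i+1}T_i=T_{i+1}T_iT_{i+1}$ ($i>0$); $T_0T_1T_0T_1=T_1T_0T_1T_0$; $T_iT_j=T_jT_i$ ($|i-j|>1$). Its subalgebra generated by $T_1,\dots,T_{d-1}$ is the type A Hecke algebra $\mathcal H^A_q(d)$. For $n=2s$ let $\mathbb I_n=\{-\tfrac{2s-1}{2},\dots,\tfrac{2s-1}{2}\}$ (half-integers) and for $n=2s+1$ let $\mathbb I_n=\{-s,\dots,s\}$; $V_n$ has basis $\{v_i:i\in\mathbb I_n\}$. $R_q(v_i\otimes v_j)=q^{-1}v_i\otimes v_j$ if $i=j$, $v_j\otimes v_i$ if $i<j$, $v_j\otimes v_i+(q^{-1}-q)v_i\otimes v_j$ if $i>j$; $K_Q(v_i)=Q^{-1}v_i$ if $i=0$, $v_{-i}$ if $i>0$, $v_{-i}+(Q^{-1}-Q)v_i$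 if $i<0$. $\mathcal H^B_{Q,q}(d)$ acts on $V_n^{\otimes d}$ from the right: $T_i$ ($i>0$) by $R_q$ on factors $i,i+1$, $T_0$ by $K_Q$ on the first factor. Categories: $\mathcal C^B_d$ (resp. $\mathcal C^A_d$) has objects $V_n$, $n\ge1$, and morphisms $\mathrm{Hom}_{\mathcal H^B_{Q,q}(d)}(V_n^{\otimes d},V_m^{\otimes d})$ (resp. $\mathrm{Hom}_{\mathcal H^A_q(d)}(V_n^{\otimes d},V_m^{\otimes d})$); $\mathcal P^d_{Q,q}$ (resp. $\mathcal{AP}^d_q$) is the category of $k$-linear functors from $\mathcal C^B_d$ (resp. $\mathcal C^A_d$) to finite-dimensional vector spaces. Monoidal structure on $\mathcal{AP}_q$: for $F\in\mathcal{AP}^d_q$, $G\in\mathcal{AP}^e_q$, $(F\otimes G)(V_n)=F(V_n)\otimes G(V_n)$, and on morphisms $F\otimes G$ is the composite $\mathrm{Hom}_{\mathcal H^A_q(d+e)}(V_n^{\otimes d+e},V_m^{\otimes d+e})\to\mathrm{Hom}_{\mathcal H^A_q(d)\otimes\mathcal H^A_q(e)}(V_n^{\otimes d}\otimes V_n^{\otimes e},V_m^{\otimes d}\otimes V_m^{\otimes e})\cong\mathrm{Hom}_{\mathcal H^A_q(d)}(V_n^{\otimes d},V_m^{\otimes d})\otimes\mathrm{Hom}_{\mathcal H^A_q(e)}(V_n^{\otimes e},V_m^{\otimes e})\to\mathrm{Hom}(F(V_n),F(V_m))\otimes\mathrm{Hom}(G(V_n),G(V_m))\to\mathrm{Hom}((F\otimes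 G)(V_n),(F\otimes G)(V_m))$; the unit is the degree-0 functor with value $k$. The action: for $G\in\mathcal P^e_{Q,q}$ and $F\in\mathcal{AP}^d_q$, $G*F\in\mathcal P^{e+d}_{Q,q}$ has $(G*F)(V_n)=G(V_n)\otimes F(V_n)$, and on morphisms the analogous composite through $\mathrm{Hom}_{\mathcal H^B_{Q,q}(e)\otimes\mathcal H^A_q(d)}$, using $\mathcal H^B_{Q,q}(e)\otimes\mathcal H^A_q(d)\subseteq\mathcal H^B_{Q,q}(e+d)$ (the second factor generated by $T_{e+1},\dots,T_{e+d-1}$); on natural transformations, $(f*g)_{V_n}=f_{V_n}\otimes g_{V_n}$. Action pair: for a category $\mathcal B$ and monoidal category $(\mathcal A,\otimes,1_{\mathcal A})$ with associator $a$ and left unitor $l$, a right action is a functor $*:\mathcal B\times\mathcal A\to\mathcal B$ with (1) $(f_1*g_1)(f_2*g_2)=(f_1f_2)*(g_1g_2)$ whenever defined; (2) a natural morphism $\lambda_{Y,X_1,X_2}:Y*(X_1\otimes X_2)\to(Y*X_1)*X_2$ with $(\lambda_{Y,X_1,X_2}*\mathrm{id}_{X_3})\circ\lambda_{Y,X_1\otimes X_2,X_3}=\lambda_{Y*X_1,X_2,X_3}\circ\lambda_{Y,X_1,X_2\otimes X_3}\circ(\mathrm{id}_Y*a_{X_1,X_2,X_3})$; (3) a natural isomorphism $\rho_Y:Y*1_{\mathcal A}\to Y$ with $(\rho_Y*\mathrm{id}_X)\circ\lambda_{Y,1,X}=\mathrm{id}_Y*l_X$. *)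

(* Defs.v *)
From HB Require Import structures.
From mathcomp Require Import all_boot all_algebra.
From Stdlib Require Import ClassicalEpsilon.
From Stdlib Require List.
Set Implicit Arguments.
Unset Strict Implicit.
Unset Printing Implicit Defensive.
Import GRing.Theory.
Local Open Scope ring_scope.

Section HeckeDefs.
Variable k : fieldType.

(* Linear maps between spaces with finite bases A, B, written as matrices
   with rows indexed by A (row-vector convention, as the Hecke algebras act
   from the right): f a b = coefficient of b in the image of a. *)
Definition mor (A B : finType) := A -> B -> k.

(* "first f, then g" *)
Definition comp (A B C : finType) (f : mor A B) (g : mor B C) : mor A C :=
  fun a c => \sum_(b : B) f a b * g b c.

Definition idm (A : finType) : mor A A := fun a b => (a == b)%:R.

Definition tensm (A B C D : finType) (f : mor A B) (g : mor C D) :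
  mor (A * C)%type (B * D)%type := fun x y => f x.1 y.1 * g x.2 y.2.

(* Basis of V_n: 'I_n, where j : 'I_n stands for the index j - (n-1)/2 of
   I_n.  Then: index j is 0 iff 2j+1 = n, positive iff 2j+1 > n,
   negative iff 2j+1 < n; the index -i corresponds to rev_ord; the order on
   indices is the order on 'I_n. *)

Variables Q q : k.

Definition Rq (n : nat) (i j i' j' : 'I_n) : k :=
    (i == j)%:R * q^-1 * ((i' == i) && (j' == j))%:R
  + (i != j)%:R * ((i' == j) && (j' == i))%:R
  + (j < i)%:R * (q^-1 - q) * ((i' == i) && (j' == j))%:R.

Definition KQ (n : nat) (i i' : 'I_n) : k :=
    ((2 * i).+1 == n)%:R * Q^-1 * (i' == i)%:R
  + (n < (2 * i).+1)%:R * (i' == rev_ord i)%:R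
  + ((2 * i).+1 < n)%:R * ((i' == rev_ord i)%:R + (Q^-1 - Q) * (i' == i)%:R).

(* basis of V_n^{(x) d}: tuples of basis indices *)
Definition tens (d n : nat) : finType := {ffun 'I_d -> 'I_n}.

Definition Tpair (d n : nat) (p p' : 'I_d) : mor (tens d n) (tens d n) :=
  fun x y => Rq (x p) (x p') (y p) (y p') *
             [forall j, ((j != p) && (j != p')) ==> (x j == y j)]%:R.

Definition Kfac (d n : nat) (p : 'I_d) : mor (tens d n) (tens d n) :=
  fun x y => KQ (x p) (y p) * [forall j, (j != p) ==> (x j == y j)]%:R.

(* Hom_{H^A_q(d)}(V_n^{(x)d}, V_m^{(x)d}): commuting with T_1,...,T_{d-1}
   (T_i acts on the factors i, i+1, i.e. 0-based positions i-1, i). *)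
Definition HomA (d n m : nat) (f : mor (tens d n) (tens d m)) : Prop :=
  forall p p' : 'I_d, val p' = (val p).+1 ->
    comp (@Tpair d n p p') f = comp f (@Tpair d m p p').

Definition HomB (d n m : nat) (f : mor (tens d n) (tens d m)) : Prop :=
  HomA f /\
  forall p : 'I_d, val p = 0 -> comp (@Kfac d n p) f = comp f (@Kfac d m p).

Definition HomPred := forall d n m : nat, mor (tens d n) (tens d m) -> Prop.

(* Raw data of a functor from C_d (objects V_n) to finite-dimensional
   vector spaces: each F(V_n) is given by a finite basis. *)
Record fdata (d : nat) := FData {
  fob : nat -> finType ;
  fmor : forall n m : nat, mor (tens d n) (tens d m) -> mor (fob n) (fob m) }.
Arguments fob {d} f n.
Arguments fmor {d} f {n m} _ _ _.
Arguments FData {d} fob fmor.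

Definition IsFunctor (Hom : HomPred) (d : nat) (F : fdata d) : Prop :=
  [/\ (forall n m (c : k) (f g : mor (tens d n) (tens d m)),
         (0 < n)%N -> (0 < m)%N -> Hom d n m f -> Hom d n m g ->
         fmor F (fun x y => c * f x y + g x y) =
         (fun x y => c * fmor F f x y + fmor F g x y)),
      (forall n, (0 < n)%N -> fmor F (@idm (tens d n)) = @idm (fob F n)) &
      (forall n m p (f : mor (tens d n) (tens d m)) (g : mor (tens d m) (tens d p)),
         (0 < n)%N -> (0 < m)%N -> (0 < p)%N ->
         Hom d n m f -> Hom d m p g ->
         fmor F (comp f g) = comp (fmor F f) (fmor F g))].

Definition casttup (d d' n : nat) (h : d = d') (x : tens d n) : tens d' n :=
  [ffun i => x (cast_ord (esym h) i)].

Definition castmor (d d' n m : nat) (h : d = d') (f : mor (tens d' n) (tens d' m)) :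
  mor (tens d n) (tens d m) := fun x y => f (casttup h x) (casttup h y).

Definition ntrans (d d' : nat) (F : fdata d) (G : fdata d') :=
  forall n, mor (fob F n) (fob G n).

Definition IsNatC (Hom : HomPred) (d d' : nat) (h : d = d') (F : fdata d)
   (G : fdata d') (eta : ntrans F G) : Prop :=
  forall n m (f : mor (tens d' n) (tens d' m)),
    (0 < n)%N -> (0 < m)%N -> Hom d' n m f ->
    comp (fmor F (castmor h f)) (eta m) = comp (eta n) (fmor G f).

Arguments IsNatC Hom {d d'} h F G eta.

Definition IsNat (Hom : HomPred) (d : nat) (F G : fdata d) (eta : ntrans F G) :=
  IsNatC Hom (erefl d) F G eta.

Definition nid (d : nat) (F : fdata d) : ntrans F F := fun n => @idm (fob F n).

(* categorical composition f1 o f2 (first f2, then f1) *)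
Definition ncomp (d1 d2 d3 : nat) (F1 : fdata d1) (F2 : fdata d2) (F3 : fdata d3)
  (f1 : ntrans F2 F3) (f2 : ntrans F1 F2) : ntrans F1 F3 :=
  fun n => comp (f2 n) (f1 n).

Definition splitL (d1 d2 n : nat) (x : tens (d1 + d2) n) : tens d1 n :=
  [ffun i => x (lshift d2 i)].
Definition splitR (d1 d2 n : nat) (x : tens (d1 + d2) n) : tens d2 n :=
  [ffun i => x (rshift d1 i)].

Definition tensmor (d1 d2 n m : nat) (a : mor (tens d1 n) (tens d1 m))
  (b : mor (tens d2 n) (tens d2 m)) : mor (tens (d1 + d2) n) (tens (d1 + d2) m) :=
  fun x y => a (splitL x) (splitL y) * b (splitR x) (splitR y).

Definition is_decomp (Hom1 Hom2 : HomPred) (d1 d2 n m : nat)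
  (phi : mor (tens (d1 + d2) n) (tens (d1 + d2) m))
  (s : seq (mor (tens d1 n) (tens d1 m) * mor (tens d2 n) (tens d2 m))) : Prop :=
  (forall p, List.In p s -> Hom1 d1 n m p.1 /\ Hom2 d2 n m p.2) /\
  phi = (fun x y => \sum_(p <- s) tensmor p.1 p.2 x y).

Definition decomp_of (Hom1 Hom2 : HomPred) (d1 d2 n m : nat)
  (phi : mor (tens (d1 + d2) n) (tens (d1 + d2) m)) :=
  epsilon (inhabits [::]) (is_decomp Hom1 Hom2 phi).

(* The product of functors F (degree d1) and G (degree d2):
   value F(V_n) (x) G(V_n); on a morphism phi, decompose (the restriction
   of) phi as sum a_i (x) b_i and send it to sum F(a_i) (x) G(b_i). *)
Definition prodF (Hom1 Hom2 : HomPred) (d1 d2 : nat) (F : fdata d1) (G : fdata d2) :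
  fdata (d1 + d2) :=
  @FData (d1 + d2) (fun n => (fob F n * fob G n)%type)
    (fun n m phi x y =>
       \sum_(p <- decomp_of Hom1 Hom2 phi) tensm (fmor F p.1) (fmor G p.2) x y).

Definition HA : HomPred := HomA.
Definition HB : HomPred := HomB.

Definition tensAP (d e : nat) (F : fdata d) (G : fdata e) : fdata (d + e) :=
  prodF HA HA F G.
Definition actP (e d : nat) (G : fdata e) (F : fdata d) : fdata (e + d) :=
  prodF HB HA G F.

(* the unit: the degree-0 functor with value k (basis: unit) *)
Definition unitAP : fdata 0 :=
  @FData 0 (fun _ => unit : finType)
    (fun n m phi _ _ => \sum_(t : tens 0 n) \sum_(t' : tens 0 m) phi t t').

Definition nprod (Hom1 Hom2 : HomPred) (d1 d2 d1' d2' : nat) (F : fdata d1)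
  (F' : fdata d1') (G : fdata d2) (G' : fdata d2') (f : ntrans F F')
  (g : ntrans G G') : ntrans (prodF Hom1 Hom2 F G) (prodF Hom1 Hom2 F' G') :=
  fun n => tensm (f n) (g n).
Arguments nprod Hom1 Hom2 {d1 d2 d1' d2' F F' G G'} f g n _ _.

Definition ntens (d1 d2 d1' d2' : nat) (F : fdata d1) (F' : fdata d1')
  (G : fdata d2) (G' : fdata d2') (f : ntrans F F') (g : ntrans G G') :
  ntrans (tensAP F G) (tensAP F' G') := nprod HA HA f g.

Definition nact (d1 d2 d1' d2' : nat) (F : fdata d1) (F' : fdata d1')
  (G : fdata d2) (G' : fdata d2') (f : ntrans F F') (g : ntrans G G') :
  ntrans (actP F G) (actP F' G') := nprod HB HA f g.

Definition assocAP (d1 d2 d3 : nat) (X1 : fdata d1) (X2 : fdata d2) (X3 : fdata d3) :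
  ntrans (tensAP (tensAP X1 X2) X3) (tensAP X1 (tensAP X2 X3)) :=
  fun n x y => (y == (x.1.1, (x.1.2, x.2)))%:R.

Definition lunitAP (d : nat) (X : fdata d) : ntrans (tensAP unitAP X) X :=
  fun n x y => (y == x.2)%:R.

Definition lam (e d1 d2 : nat) (Y : fdata e) (X1 : fdata d1) (X2 : fdata d2) :
  ntrans (actP Y (tensAP X1 X2)) (actP (actP Y X1) X2) :=
  fun n x y => (y == ((x.1, x.2.1), x.2.2))%:R.

Definition rho (e : nat) (Y : fdata e) : ntrans (actP Y unitAP) Y :=
  fun n x y => (y == x.1)%:R.

End HeckeDefs.

Arguments IsNatC {k} Hom {d d'} h F G eta.
Arguments nid {k d} F n _ _.
Arguments ncomp {k d1 d2 d3 F1 F2 F3} f1 f2 n _ _.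
Arguments ntens {k} q {d1 d2 d1' d2' F F' G G'} f g n _ _.
Arguments nact {k} Q q {d1 d2 d1' d2' F F' G G'} f g n _ _.
Arguments assocAP {k} q {d1 d2 d3} X1 X2 X3 n _ _.
Arguments lunitAP {k} q {d} X n _ _.
Arguments lam {k} Q q {e d1 d2} Y X1 X2 n _ _.
Arguments rho {k} Q q {e} Y n _ _.

(* Main.v *)
From HB Require Import structures.
From mathcomp Require Import all_boot all_algebra.
From Stdlib Require Import ClassicalEpsilon FunctionalExtensionality.
From Stdlib Require List.
Require Import Defs.
Set Implicit Arguments.
Unset Strict Implicit.
Unset Printing Implicit Defensive.
Import GRing.Theory.
Local Open Scope ring_scope.


Section LinAlg.
Variable k : fieldType.

Definition lclosed (I : Type) (P : (I -> k) -> Prop) :=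
  P (fun _ => 0) /\ forall c f g, P f -> P g -> P (fun i => c * f i + g i).
Definition llinear (I J : Type) (P : (I -> k) -> Prop) (Phi : (I -> k) -> (J -> k)) :=
  forall c f g, P f -> P g -> Phi (fun i => c * f i + g i) = (fun j => c * Phi f j + Phi g j).

Lemma lin_zero I J P Phi : @lclosed I P -> @llinear I J P Phi -> Phi (fun _ => 0) = (fun _ => 0).
Proof.
move=> [P0 _] L; have := L 1 _ _ P0 P0.
have -> : (fun i : I => 1 * (0:k) + 0) = (fun _ => 0).
  by apply: functional_extensionality => i; rewrite mul1r addr0.
move=> E; apply: functional_extensionality => j.
have := congr1 (fun f => f j) E => /=; rewrite mul1r => h.
by apply: (@addrI _ (Phi (fun _ => 0) j)); rewrite addr0 -h.
Qed.

Lemma closed_sum I X P (r : seq X) (c : X -> k) (f : X -> I -> k) :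
  @lclosed I P -> (forall x, P (f x)) -> P (fun i => \sum_(x <- r) c x * f x i).
Proof.
move=> [P0 PL] Pf; elim: r => [|x r IH].
  have -> : (fun i => \sum_(x <- [::]) c x * f x i) = (fun _ => 0).
    by apply: functional_extensionality => i; rewrite big_nil.
  done.
have -> : (fun i => \sum_(y <- x :: r) c y * f y i) =
   (fun i => c x * f x i + \sum_(y <- r) c y * f y i).
  by apply: functional_extensionality => i; rewrite big_cons.
exact: PL.
Qed.

Lemma lin_sum I J X P Phi (r : seq X) (c : X -> k) (f : X -> I -> k) :
  @lclosed I P -> @llinear I J P Phi -> (forall x, P (f x)) ->
  Phi (fun i => \sum_(x <- r) c x * f x i) = (fun j => \sum_(x <- r) c x * Phi (f x) j).
Proof.
move=> Pc L Pf; elim: r => [|x r IH].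
  have -> : (fun i => \sum_(x <- [::]) c x * f x i) = (fun _ => 0).
    by apply: functional_extensionality => i; rewrite big_nil.
  rewrite (lin_zero Pc L).
  by apply: functional_extensionality => i; rewrite big_nil.
have -> : (fun i => \sum_(y <- x :: r) c y * f y i) =
   (fun i => c x * f x i + \sum_(y <- r) c y * f y i).
  by apply: functional_extensionality => i; rewrite big_cons.
rewrite L //; last exact: closed_sum.
rewrite IH; apply: functional_extensionality => j; by rewrite big_cons.
Qed.

End LinAlg.


Lemma In_map (A B : Type) (f : A -> B) (s : seq A) y :
  List.In y (map f s) -> exists x, List.In x s /\ y = f x.
Proof.
elim: s => [|a s IH] //= [<-|/IH [x [h ->]]]; first by exists a; split; [left|].
by exists x; split; [right|].
Qed.

Lemma In_cat (A : Type) (s1 s2 : seq A) y :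
  List.In y (s1 ++ s2) -> List.In y s1 \/ List.In y s2.
Proof.
elim: s1 => [|a s IH] /=; first by right.
case=> [<-|/IH [h|h]]; by [left; left|left; right|right].
Qed.

Lemma In_flatten (A : Type) (ss : seq (seq A)) y :
  List.In y (flatten ss) -> exists s, List.In s ss /\ List.In y s.
Proof.
elim: ss => [|s ss IH] //= h; case: (In_cat h) => [h'|/IH [t [h1 h2]]].
  by exists s; split; [left|].
by exists t; split; [right|].
Qed.

Lemma In_nth (A : Type) (x0 : A) (s : seq A) i :
  (i < size s)%N -> List.In (nth x0 s i) s.
Proof.
elim: s i => [|a s IH] [|i] //= h; first by left.
by right; apply: IH.
Qed.

Lemma big_In (R : Type) (idx : R) (op : R -> R -> R) (A : Type) (s : seq A) (F G : A -> R) :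
  (forall p, List.In p s -> F p = G p) -> \big[op/idx]_(p <- s) F p = \big[op/idx]_(p <- s) G p.
Proof.
elim: s => [|a s IH] H; first by rewrite !big_nil.
rewrite !big_cons H; last by left.
by rewrite IH // => p hp; apply: H; right.
Qed.

Section LinAlg2.
Variable k : fieldType.

Lemma decomp_exists (I1 I2 : finType) (P1 : (I1 -> k) -> Prop) (P2 : (I2 -> k) -> Prop)
  (phi : I1 -> I2 -> k) :
  lclosed P1 -> lclosed P2 -> (forall i2, P1 (fun i1 => phi i1 i2)) -> (forall i1, P2 (phi i1)) ->
  exists s : seq ((I1 -> k) * (I2 -> k)),
    (forall p, List.In p s -> P1 p.1 /\ P2 p.2) /\
    forall i1 i2, phi i1 i2 = \sum_(p <- s) p.1 i1 * p.2 i2.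
Proof.
move=> C1 C2 H1 H2.
pose M := \matrix_(a < #|I1|, b < #|I2|) phi (enum_val a) (enum_val b).
pose Cb := col_base M; pose Rb := row_base M.
have [X hX] : exists X, Rb = X *m M by apply/submxP; rewrite eq_row_base.
have [Y hY] : exists Y, Rb *m Y = 1%:M by apply/row_freeP; exact: row_base_free.
have hC : Cb = M *m Y.
  have := congr1 (mulmx^~ Y) (mulmx_base M); rewrite /= -mulmxA hY mulmx1 => <-; done.
exists [seq (fun i1 => Cb (enum_rank i1) j, fun i2 => Rb j (enum_rank i2)) | j <- index_enum 'I_(\rank M)].
split.
  move=> p hp; case: (In_map hp) => j [_ ->] /=; split.
    have -> : (fun i1 => Cb (enum_rank i1) j) =
       (fun i1 => \sum_(b <- index_enum 'I_#|I2|) Y b j * phi i1 (enum_val b)).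
      apply: functional_extensionality => i1; rewrite hC mxE; apply: eq_bigr => b _.
      by rewrite mxE enum_rankK mulrC.
    exact: (closed_sum _ _ C1).
  have -> : (fun i2 => Rb j (enum_rank i2)) =
       (fun i2 => \sum_(a <- index_enum 'I_#|I1|) X j a * phi (enum_val a) i2).
    apply: functional_extensionality => i2; rewrite hX mxE; apply: eq_bigr => a _.
    by rewrite mxE enum_rankK.
  exact: (closed_sum _ _ C2).
move=> i1 i2; rewrite big_map.
have -> : phi i1 i2 = M (enum_rank i1) (enum_rank i2) by rewrite mxE !enum_rankK.
have := congr1 (fun A : 'M[k]_(#|I1|, #|I2|) => A (enum_rank i1) (enum_rank i2)) (mulmx_base M).
by rewrite /= mxE => <-.
Qed.


Lemma decomp_indep0 (I1 I2 J1 J2 : finType) (P1 : (I1 -> k) -> Prop) (P2 : (I2 -> k) -> Prop)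
  (Phi1 : (I1 -> k) -> (J1 -> k)) (Phi2 : (I2 -> k) -> (J2 -> k))
  (s : seq ((I1 -> k) * (I2 -> k))) :
  lclosed P1 -> lclosed P2 -> llinear P1 Phi1 -> llinear P2 Phi2 ->
  (forall p, List.In p s -> P1 p.1 /\ P2 p.2) ->
  (forall i1 i2, \sum_(p <- s) p.1 i1 * p.2 i2 = 0) ->
  forall j1 j2, \sum_(p <- s) Phi1 p.1 j1 * Phi2 p.2 j2 = 0.
Proof.
move=> C1 C2 L1 L2 Hs H0 j1 j2.
pose N := size s. pose x0 := (fun _ : I1 => 0 : k, fun _ : I2 => 0 : k).
pose a (i : 'I_N) := (nth x0 s i).1; pose b (i : 'I_N) := (nth x0 s i).2.
have Pa : forall i, P1 (a i) by move=> i; have [] := Hs _ (In_nth x0 (ltn_ord i)).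
have Pb : forall i, P2 (b i) by move=> i; have [] := Hs _ (In_nth x0 (ltn_ord i)).
have {}H0 : forall i1 i2, \sum_(i < N) a i i1 * b i i2 = 0.
  by move=> i1 i2; have := H0 i1 i2; rewrite (big_nth x0) big_mkord.
rewrite (big_nth x0) big_mkord.
pose Bm := \matrix_(i < N, c < #|I2|) b i (enum_val c).
pose Cb := col_base Bm; pose Rb := row_base Bm.
have [X hX] : exists X, Rb = X *m Bm by apply/submxP; rewrite eq_row_base.
have [Y hY] : exists Y, Rb *m Y = 1%:M by apply/row_freeP; exact: row_base_free.
pose beta (j : 'I_(\rank Bm)) := fun i2 => Rb j (enum_rank i2).
have Pbeta : forall j, P2 (beta j).
  move=> j; have -> : beta j =
       (fun i2 => \sum_(i <- index_enum 'I_N) X j i * b i i2).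
    apply: functional_extensionality => i2; rewrite /beta hX mxE; apply: eq_bigr => i _.
    by rewrite mxE enum_rankK.
  exact: (closed_sum _ _ C2).
have hb : forall i, b i = fun i2 => \sum_(j <- index_enum 'I_(\rank Bm)) Cb i j * beta j i2.
  move=> i; apply: functional_extensionality => i2.
  have := congr1 (fun A : 'M[k]_(N, #|I2|) => A i (enum_rank i2)) (mulmx_base Bm).
  by rewrite /= !mxE enum_rankK => <-.
have halpha : forall j, (fun i1 => \sum_(i <- index_enum 'I_N) Cb i j * a i i1) = (fun _ => 0).
  move=> j; apply: functional_extensionality => i1.
  pose v := \row_(i < N) a i i1.
  have hv : v *m Bm = 0.
    apply/matrixP => z w; rewrite !mxE -[RHS](H0 i1 (enum_val w)).
    by apply: eq_bigr => i _; rewrite !mxE.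
  have hvC : v *m Cb = 0.
    have : v *m Cb *m (Rb *m Y) = 0 by rewrite mulmxA -(mulmxA v) mulmx_base hv mul0mx.
    by rewrite hY mulmx1.
  have := congr1 (fun A : 'M[k]_(1, \rank Bm) => A 0 j) hvC; rewrite /= !mxE => h.
  apply: (eq_trans _ h).
  by apply: eq_bigr => i _; rewrite [v _ _]mxE mulrC.
change (\sum_(i < N) Phi1 (a i) j1 * Phi2 (b i) j2 = 0).
transitivity (\sum_(j <- index_enum 'I_(\rank Bm))
   Phi2 (beta j) j2 * Phi1 (fun i1 => \sum_(i <- index_enum 'I_N) Cb i j * a i i1) j1).
  under eq_bigr do rewrite hb (lin_sum _ _ C2 L2 Pbeta).
  under [RHS]eq_bigr do rewrite (lin_sum _ _ C1 L1 Pa).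
  under eq_bigr do rewrite mulr_sumr.
  under [RHS]eq_bigr do rewrite mulr_sumr.
  rewrite exchange_big /=; apply: eq_bigr => i _; apply: eq_bigr => j _.
  by rewrite mulrA mulrC (mulrC (Phi1 _ _)).
by rewrite big1 // => j _; rewrite halpha (lin_zero C1 L1) mulr0.
Qed.

Lemma decomp_indep (I1 I2 J1 J2 : finType) (P1 : (I1 -> k) -> Prop) (P2 : (I2 -> k) -> Prop)
  (Phi1 : (I1 -> k) -> (J1 -> k)) (Phi2 : (I2 -> k) -> (J2 -> k))
  (s s' : seq ((I1 -> k) * (I2 -> k))) :
  lclosed P1 -> lclosed P2 -> llinear P1 Phi1 -> llinear P2 Phi2 ->
  (forall p, List.In p s -> P1 p.1 /\ P2 p.2) ->
  (forall p, List.In p s' -> P1 p.1 /\ P2 p.2) ->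
  (forall i1 i2, \sum_(p <- s) p.1 i1 * p.2 i2 = \sum_(p <- s') p.1 i1 * p.2 i2) ->
  forall j1 j2, \sum_(p <- s) Phi1 p.1 j1 * Phi2 p.2 j2 = \sum_(p <- s') Phi1 p.1 j1 * Phi2 p.2 j2.
Proof.
move=> C1 C2 L1 L2 Hs Hs' E j1 j2.
pose ng (p : (I1 -> k) * (I2 -> k)) := (fun i => -1 * p.1 i + 0, p.2).
have := @decomp_indep0 I1 I2 J1 J2 P1 P2 Phi1 Phi2 (s ++ map ng s') C1 C2 L1 L2.
have PN : forall f, P1 f -> P1 (fun i => -1 * f i + 0).
  by move=> f Pf; case: C1 => P0 PL; apply: PL.
have PhN : forall f, P1 f -> Phi1 (fun i => -1 * f i + 0) = fun j => - Phi1 f j.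
  move=> f Pf; case: (C1) => P0 _; rewrite (L1 _ _ _ Pf P0) (lin_zero C1 L1).
  by apply: functional_extensionality => j; rewrite addr0 mulN1r.
move=> H.
have Hc : forall p, List.In p (s ++ map ng s') -> P1 p.1 /\ P2 p.2.
  move=> p hp; case: (In_cat hp) => [/Hs //|hp'].
  by case: (In_map hp') => q [/Hs' [h1 h2] ->]; split => //; apply: PN.
have Hz : forall i1 i2, \sum_(p <- s ++ map ng s') p.1 i1 * p.2 i2 = 0.
  move=> i1 i2; rewrite big_cat big_map /= E -big_split /=.
  by rewrite big1 // => p _; rewrite mulN1r addr0 mulNr subrr.
have := H Hc Hz j1 j2; rewrite big_cat big_map /=.
rewrite (@big_In _ _ _ _ s' (fun p => Phi1 (ng p).1 j1 * Phi2 (ng p).2 j2) (fun p => - (Phi1 p.1 j1 * Phi2 p.2 j2))); last first.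
  by move=> p /Hs' [h1 _]; rewrite PhN // mulNr.
by rewrite sumrN => /eqP; rewrite subr_eq0 => /eqP.
Qed.

End LinAlg2.


Section Mor.
Variable k : fieldType.

Definition mclosed (A B : finType) (P : mor k A B -> Prop) :=
  P (fun _ _ => 0) /\ forall c f g, P f -> P g -> P (fun x y => c * f x y + g x y).
Definition mlinear (A B C D : finType) (P : mor k A B -> Prop) (Phi : mor k A B -> mor k C D) :=
  forall c f g, P f -> P g -> Phi (fun x y => c * f x y + g x y) = (fun x y => c * Phi f x y + Phi g x y).

Lemma mor_indep (A1 B1 A2 B2 C1 D1 C2 D2 : finType) (P1 : mor k A1 B1 -> Prop)
  (P2 : mor k A2 B2 -> Prop) (Phi1 : mor k A1 B1 -> mor k C1 D1) (Phi2 : mor k A2 B2 -> mor k C2 D2)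
  (s s' : seq (mor k A1 B1 * mor k A2 B2)) :
  mclosed P1 -> mclosed P2 -> mlinear P1 Phi1 -> mlinear P2 Phi2 ->
  (forall p, List.In p s -> P1 p.1 /\ P2 p.2) ->
  (forall p, List.In p s' -> P1 p.1 /\ P2 p.2) ->
  (forall a1 b1 a2 b2, \sum_(p <- s) p.1 a1 b1 * p.2 a2 b2 = \sum_(p <- s') p.1 a1 b1 * p.2 a2 b2) ->
  forall c1 d1 c2 d2, \sum_(p <- s) Phi1 p.1 c1 d1 * Phi2 p.2 c2 d2 =
                      \sum_(p <- s') Phi1 p.1 c1 d1 * Phi2 p.2 c2 d2.
Proof.
move=> [P10 P1L] [P20 P2L] L1 L2 Hs Hs' E c1 d1 c2 d2.
pose u (p : mor k A1 B1 * mor k A2 B2) :=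
  ((fun ab : (A1 * B1)%type => p.1 ab.1 ab.2), (fun ab : (A2 * B2)%type => p.2 ab.1 ab.2)).
pose Q1 := fun v : (A1 * B1)%type -> k => P1 (fun a b => v (a, b)).
pose Q2 := fun v : (A2 * B2)%type -> k => P2 (fun a b => v (a, b)).
pose F1 := fun v : (A1 * B1)%type -> k => fun cd : (C1 * D1)%type => Phi1 (fun a b => v (a, b)) cd.1 cd.2.
pose F2 := fun v : (A2 * B2)%type -> k => fun cd : (C2 * D2)%type => Phi2 (fun a b => v (a, b)) cd.1 cd.2.
have C1' : lclosed Q1 by split; [exact: P10 | move=> c f g; exact: P1L].
have C2' : lclosed Q2 by split; [exact: P20 | move=> c f g; exact: P2L].
have L1' : llinear Q1 F1.
  move=> c f g hf hg; apply: functional_extensionality => cd; rewrite /F1.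
  by rewrite (L1 c (fun a b => f (a, b)) (fun a b => g (a, b)) hf hg).
have L2' : llinear Q2 F2.
  move=> c f g hf hg; apply: functional_extensionality => cd; rewrite /F2.
  by rewrite (L2 c (fun a b => f (a, b)) (fun a b => g (a, b)) hf hg).
have := @decomp_indep k _ _ _ _ Q1 Q2 F1 F2 (map u s) (map u s') C1' C2' L1' L2'.
move=> H.
have h1 : forall p, List.In p (map u s) -> Q1 p.1 /\ Q2 p.2.
  by move=> p hp; case: (In_map hp) => q [/Hs hq ->].
have h2 : forall p, List.In p (map u s') -> Q1 p.1 /\ Q2 p.2.
  by move=> p hp; case: (In_map hp) => q [/Hs' hq ->].
have h3 : forall i1 i2, \sum_(p <- map u s) p.1 i1 * p.2 i2 = \sum_(p <- map u s') p.1 i1 * p.2 i2.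
  by move=> [a1 b1] [a2 b2]; rewrite !big_map; apply: E.
by have := H h1 h2 h3 (c1, d1) (c2, d2); rewrite !big_map.
Qed.

End Mor.


Section Idx.
Variable k : fieldType.

Definition merge d1 d2 n (x1 : tens d1 n) (x2 : tens d2 n) : tens (d1 + d2) n :=
  [ffun i => match split i with inl a => x1 a | inr b => x2 b end].

Lemma split_l m n (i : 'I_m) : split (lshift n i) = inl i.
Proof. exact: (unsplitK (inl i)). Qed.
Lemma split_r m n (i : 'I_n) : split (rshift m i) = inr i.
Proof. exact: (unsplitK (inr i)). Qed.

Lemma splitL_merge d1 d2 n x1 x2 : splitL (@merge d1 d2 n x1 x2) = x1.
Proof. by apply/ffunP => i; rewrite !ffunE split_l. Qed.
Lemma splitR_merge d1 d2 n x1 x2 : splitR (@merge d1 d2 n x1 x2) = x2.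
Proof. by apply/ffunP => i; rewrite !ffunE split_r. Qed.
Lemma merge_split d1 d2 n (x : tens (d1 + d2) n) : merge (splitL x) (splitR x) = x.
Proof.
apply/ffunP => i; rewrite !ffunE; rewrite -{2}(splitK i).
by case: (split i) => a /=; rewrite ffunE.
Qed.

Lemma sum_split d1 d2 n (F : tens (d1 + d2) n -> k) :
  \sum_(z : tens (d1 + d2) n) F z = \sum_(z1 : tens d1 n) \sum_(z2 : tens d2 n) F (merge z1 z2).
Proof.
rewrite pair_bigA /=.
rewrite (reindex (fun p : (tens d1 n * tens d2 n)%type => merge p.1 p.2)) //.
apply: onW_bij; exists (fun z => (splitL z, splitR z)).
  by case=> a b /=; rewrite splitL_merge splitR_merge.
by move=> z /=; rewrite merge_split.
Qed.

Lemma sum_delta (T : finType) (a : T) (F : T -> k) : \sum_(z : T) (a == z)%:R * F z = F a.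
Proof.
rewrite (bigD1 a) //= eqxx mul1r big1 ?addr0 // => z /negbTE.
by rewrite eq_sym => ->; rewrite mul0r.
Qed.
Lemma sum_delta' (T : finType) (a : T) (F : T -> k) : \sum_(z : T) F z * (z == a)%:R = F a.
Proof.
rewrite -[RHS](sum_delta a F); apply: eq_bigr => z _; by rewrite mulrC eq_sym.
Qed.

Lemma mor_exists d1 d2 n m (P1 : mor k (tens d1 n) (tens d1 m) -> Prop)
  (P2 : mor k (tens d2 n) (tens d2 m) -> Prop) (phi : mor k (tens (d1 + d2) n) (tens (d1 + d2) m)) :
  mclosed P1 -> mclosed P2 ->
  (forall x2 y2, P1 (fun x1 y1 => phi (merge x1 x2) (merge y1 y2))) ->
  (forall x1 y1, P2 (fun x2 y2 => phi (merge x1 x2) (merge y1 y2))) ->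
  exists s, (forall p, List.In p s -> P1 p.1 /\ P2 p.2) /\
            phi = (fun x y => \sum_(p <- s) tensmor p.1 p.2 x y).
Proof.
move=> [P10 P1L] [P20 P2L] H1 H2.
pose Q1 := fun v : (tens d1 n * tens d1 m)%type -> k => P1 (fun a b => v (a, b)).
pose Q2 := fun v : (tens d2 n * tens d2 m)%type -> k => P2 (fun a b => v (a, b)).
have C1 : lclosed Q1 by split; [exact: P10 | move=> c f g; exact: P1L].
have C2 : lclosed Q2 by split; [exact: P20 | move=> c f g; exact: P2L].
pose phi' := fun (i1 : (tens d1 n * tens d1 m)%type) (i2 : (tens d2 n * tens d2 m)%type) =>
   phi (merge i1.1 i2.1) (merge i1.2 i2.2).
have [s' [Hs' E]] := @decomp_exists k _ _ Q1 Q2 phi' C1 C2 (fun i2 => H1 i2.1 i2.2) (fun i1 => H2 i1.1 i1.2).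
exists (map (fun p => ((fun a b => p.1 (a, b)), (fun a b => p.2 (a, b)))) s'); split.
  by move=> p hp; case: (In_map hp) => q [/Hs' hq ->].
apply: functional_extensionality => x; apply: functional_extensionality => y.
rewrite big_map -(merge_split x) -(merge_split y).
rewrite [LHS](E (splitL x, splitL y) (splitR x, splitR y)).
by apply: eq_bigr => p _; rewrite /tensmor !splitL_merge !splitR_merge.
Qed.

End Idx.


Section Comp.
Variable k : fieldType.

Lemma comp_linr (A B C : finType) (T : mor k A B) c (f g : mor k B C) :
  comp T (fun x y => c * f x y + g x y) = fun x y => c * comp T f x y + comp T g x y.
Proof.
apply: functional_extensionality => x; apply: functional_extensionality => y.
rewrite /comp mulr_sumr -big_split /=; apply: eq_bigr => b _.
by rewrite mulrDr mulrCA.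
Qed.

Lemma comp_linl (A B C : finType) (T : mor k B C) c (f g : mor k A B) :
  comp (fun x y => c * f x y + g x y) T = fun x y => c * comp f T x y + comp g T x y.
Proof.
apply: functional_extensionality => x; apply: functional_extensionality => y.
rewrite /comp mulr_sumr -big_split /=; apply: eq_bigr => b _.
by rewrite mulrDl mulrA.
Qed.

Lemma comp0r (A B C : finType) (T : mor k A B) :
  comp T (fun (_ : B) (_ : C) => 0) = fun _ _ => 0.
Proof.
apply: functional_extensionality => x; apply: functional_extensionality => y.
by rewrite /comp big1 // => b _; rewrite mulr0.
Qed.

Lemma comp0l (A B C : finType) (T : mor k B C) :
  comp (fun (_ : A) (_ : B) => 0) T = fun _ _ => 0.
Proof.
apply: functional_extensionality => x; apply: functional_extensionality => y.
by rewrite /comp big1 // => b _; rewrite mul0r.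
Qed.

Lemma compA (A B C D : finType) (f : mor k A B) (g : mor k B C) (h : mor k C D) :
  comp (comp f g) h = comp f (comp g h).
Proof.
apply: functional_extensionality => x; apply: functional_extensionality => y.
rewrite /comp; under eq_bigr do rewrite mulr_suml.
rewrite exchange_big; apply: eq_bigr => b _; rewrite mulr_sumr.
by apply: eq_bigr => c _; rewrite mulrA.
Qed.

Lemma comp_idl (A B : finType) (f : mor k A B) : comp (@idm k A) f = f.
Proof.
apply: functional_extensionality => x; apply: functional_extensionality => y.
by rewrite /comp /idm sum_delta.
Qed.

Lemma comp_idr (A B : finType) (f : mor k A B) : comp f (@idm k B) = f.
Proof.
apply: functional_extensionality => x; apply: functional_extensionality => y.
by rewrite /comp /idm sum_delta'.
Qed.

Lemma comp_sumr (A B C : finType) (X : Type) (s : seq X) (T : mor k A B) (f : X -> mor k B C) :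
  comp T (fun x y => \sum_(p <- s) f p x y) = fun x y => \sum_(p <- s) comp T (f p) x y.
Proof.
apply: functional_extensionality => x; apply: functional_extensionality => y.
rewrite /comp; under eq_bigr do rewrite mulr_sumr.
by rewrite exchange_big.
Qed.

Lemma comp_suml (A B C : finType) (X : Type) (s : seq X) (T : mor k B C) (f : X -> mor k A B) :
  comp (fun x y => \sum_(p <- s) f p x y) T = fun x y => \sum_(p <- s) comp (f p) T x y.
Proof.
apply: functional_extensionality => x; apply: functional_extensionality => y.
rewrite /comp; under eq_bigr do rewrite mulr_suml.
by rewrite exchange_big.
Qed.

Lemma comp_tensm (A1 B1 C1 A2 B2 C2 : finType) (a : mor k A1 B1) (a' : mor k B1 C1)
  (b : mor k A2 B2) (b' : mor k B2 C2) :
  comp (tensm a b) (tensm a' b') = tensm (comp a a') (comp b b').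
Proof.
apply: functional_extensionality => x; apply: functional_extensionality => y.
rewrite /comp /tensm.
rewrite -(pair_bigA _ (fun (z1 : B1) (z2 : B2) => a x.1 z1 * b x.2 z2 * (a' z1 y.1 * b' z2 y.2))) /=.
rewrite mulr_suml; apply: eq_bigr => z1 _.
rewrite mulr_sumr; apply: eq_bigr => z2 _.
by rewrite mulrACA.
Qed.

Lemma comp_tensmor d1 d2 n m p (a : mor k (tens d1 n) (tens d1 m)) (a' : mor k (tens d1 m) (tens d1 p))
  (b : mor k (tens d2 n) (tens d2 m)) (b' : mor k (tens d2 m) (tens d2 p)) :
  comp (tensmor a b) (tensmor a' b') = tensmor (comp a a') (comp b b').
Proof.
apply: functional_extensionality => x; apply: functional_extensionality => y.
rewrite /comp /tensmor sum_split mulr_suml; apply: eq_bigr => z1 _.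
rewrite mulr_sumr; apply: eq_bigr => z2 _.
by rewrite !splitL_merge !splitR_merge mulrACA.
Qed.

Lemma tensm_id (A B : finType) : tensm (@idm k A) (@idm k B) = @idm k (A * B)%type.
Proof.
apply: functional_extensionality => x; apply: functional_extensionality => y.
rewrite /tensm /idm -natrM mulnb; congr (_ %:R); case: x y => [a b] [c d] /=.
Qed.

Lemma tensmor_id d1 d2 n : tensmor (@idm k (tens d1 n)) (@idm k (tens d2 n)) = @idm k (tens (d1 + d2) n).
Proof.
apply: functional_extensionality => x; apply: functional_extensionality => y.
rewrite /tensmor /idm -natrM mulnb; congr (_ %:R); congr (nat_of_bool _).
apply/andP/eqP => [[/eqP h1 /eqP h2]|->]; last by rewrite !eqxx.
by rewrite -(merge_split x) -(merge_split y) h1 h2.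
Qed.

End Comp.


Lemma funext2 (A B C : Type) (f g : A -> B -> C) : (forall a b, f a b = g a b) -> f = g.
Proof.
move=> h; apply: functional_extensionality => a; apply: functional_extensionality => b; exact: h.
Qed.

Lemma forall_split d1 d2 (P : pred 'I_(d1 + d2)) :
  [forall j, P j] = [forall j, P (lshift d2 j)] && [forall j, P (rshift d1 j)].
Proof.
apply/forallP/andP => [h|[/forallP h1 /forallP h2] j].
  by split; apply/forallP => j.
by rewrite -(splitK j); case: (split j) => a /=.
Qed.

Section HomFacts.
Variables (k : fieldType) (Q q : k).

Lemma HA_closed d n m : mclosed (@HA k q d n m).
Proof.
split.
  by move=> p p' _; rewrite comp0r comp0l.
by move=> c f g hf hg p p' hp; rewrite comp_linr comp_linl (hf p p' hp) (hg p p' hp).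
Qed.

Lemma HB_closed d n m : mclosed (@HB k Q q d n m).
Proof.
split.
  split; first exact: (HA_closed d n m).1.
  by move=> p _; rewrite comp0r comp0l.
move=> c f g [hf1 hf2] [hg1 hg2]; split; first exact: (HA_closed d n m).2.
by move=> p hp; rewrite comp_linr comp_linl (hf2 p hp) (hg2 p hp).
Qed.

Lemma HA_comp d n m p (f : mor k (tens d n) (tens d m)) (g : mor k (tens d m) (tens d p)) :
  HA q f -> HA q g -> HA q (comp f g).
Proof.
by move=> hf hg p0 p' h; rewrite -compA (hf _ _ h) compA (hg _ _ h) -compA.
Qed.

Lemma HB_comp d n m p (f : mor k (tens d n) (tens d m)) (g : mor k (tens d m) (tens d p)) :
  HB Q q f -> HB Q q g -> HB Q q (comp f g).
Proof.
move=> [hf1 hf2] [hg1 hg2]; split; first exact: HA_comp.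
by move=> p0 h; rewrite -compA (hf2 _ h) compA (hg2 _ h) -compA.
Qed.

Lemma HA_id d n : HA q (@idm k (tens d n)).
Proof. by move=> p p' _; rewrite comp_idl comp_idr. Qed.

Lemma HB_id d n : HB Q q (@idm k (tens d n)).
Proof. by split; [exact: HA_id| move=> p _; rewrite comp_idl comp_idr]. Qed.

Lemma HA0 n m (f : mor k (tens 0 n) (tens 0 m)) : HA q f.
Proof. by move=> []. Qed.

Lemma TpairL d1 d2 n (p p' : 'I_d1) :
  Tpair q (lshift d2 p) (lshift d2 p') = tensmor (Tpair q (n := n) p p') (@idm k _).
Proof.
apply: funext2 => x y; rewrite /Tpair /tensmor /idm !ffunE forall_split -mulrA -natrM mulnb.
congr (_ * _%:R); congr (nat_of_bool (_ && _)).
  by apply: eq_forallb => j; rewrite !ffunE !eq_lshift.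
apply/forallP/eqP => [h|h j].
  apply/ffunP => j; rewrite !ffunE; by have := h j; rewrite !eq_rlshift /= => /eqP.
by have := congr1 (fun f : tens _ n => f j) h; rewrite !ffunE !eq_rlshift /= => ->.
Qed.

Lemma TpairR d1 d2 n (p p' : 'I_d2) :
  Tpair q (rshift d1 p) (rshift d1 p') = tensmor (@idm k _) (Tpair q (n := n) p p').
Proof.
apply: funext2 => x y; rewrite /Tpair /tensmor /idm !ffunE forall_split mulrCA -natrM mulnb.
congr (_ * _%:R); congr (nat_of_bool (_ && _)); last first.
  by apply: eq_forallb => j; rewrite !ffunE !eq_rshift.
apply/forallP/eqP => [h|h j].
  apply/ffunP => j; rewrite !ffunE; by have := h j; rewrite !eq_lrshift /= => /eqP.
by have := congr1 (fun f : tens _ n => f j) h; rewrite !ffunE !eq_lrshift /= => ->.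
Qed.

Lemma KfacL d1 d2 n (p : 'I_d1) :
  Kfac Q (lshift d2 p) = tensmor (Kfac Q (n := n) p) (@idm k _).
Proof.
apply: funext2 => x y; rewrite /Kfac /tensmor /idm !ffunE forall_split -mulrA -natrM mulnb.
congr (_ * _%:R); congr (nat_of_bool (_ && _)).
  by apply: eq_forallb => j; rewrite !ffunE !eq_lshift.
apply/forallP/eqP => [h|h j].
  apply/ffunP => j; rewrite !ffunE; by have := h j; rewrite !eq_rlshift /= => /eqP.
by have := congr1 (fun f : tens _ n => f j) h; rewrite !ffunE !eq_rlshift /= => ->.
Qed.

End HomFacts.

Section Slices.
Variables (k : fieldType) (Q q : k).

Lemma comp_tensL d1 d2 n m (T : mor k (tens d1 n) (tens d1 n)) (phi : mor k (tens (d1 + d2) n) (tens (d1 + d2) m)) x1 x2 y1 y2 :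
  comp (tensmor T (@idm k _)) phi (merge x1 x2) (merge y1 y2) =
  comp T (fun a b => phi (merge a x2) (merge b y2)) x1 y1.
Proof.
rewrite /comp sum_split; apply: eq_bigr => z1 _.
rewrite /tensmor /idm !splitL_merge; under eq_bigr do rewrite !splitL_merge !splitR_merge -mulrA.
by rewrite -mulr_sumr sum_delta.
Qed.

Lemma comp_tensL' d1 d2 n m (T : mor k (tens d1 m) (tens d1 m)) (phi : mor k (tens (d1 + d2) n) (tens (d1 + d2) m)) x1 x2 y1 y2 :
  comp phi (tensmor T (@idm k _)) (merge x1 x2) (merge y1 y2) =
  comp (fun a b => phi (merge a x2) (merge b y2)) T x1 y1.
Proof.
rewrite /comp sum_split; apply: eq_bigr => z1 _.
rewrite /tensmor /idm; under eq_bigr do rewrite !splitL_merge !splitR_merge mulrCA.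
by rewrite -mulr_sumr sum_delta' mulrC.
Qed.

Lemma comp_tensR d1 d2 n m (T : mor k (tens d2 n) (tens d2 n)) (phi : mor k (tens (d1 + d2) n) (tens (d1 + d2) m)) x1 x2 y1 y2 :
  comp (tensmor (@idm k _) T) phi (merge x1 x2) (merge y1 y2) =
  comp T (fun a b => phi (merge x1 a) (merge y1 b)) x2 y2.
Proof.
rewrite /comp sum_split exchange_big; apply: eq_bigr => z2 _.
rewrite /tensmor /idm; under eq_bigr do rewrite !splitL_merge !splitR_merge mulrAC -mulrA.
by rewrite sum_delta mulrC.
Qed.

Lemma comp_tensR' d1 d2 n m (T : mor k (tens d2 m) (tens d2 m)) (phi : mor k (tens (d1 + d2) n) (tens (d1 + d2) m)) x1 x2 y1 y2 :
  comp phi (tensmor (@idm k _) T) (merge x1 x2) (merge y1 y2) =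
  comp (fun a b => phi (merge x1 a) (merge y1 b)) T x2 y2.
Proof.
rewrite /comp sum_split exchange_big; apply: eq_bigr => z2 _.
rewrite /tensmor /idm; under eq_bigr do rewrite !splitL_merge !splitR_merge mulrCA (mulrC (_%:R)) -mulrA.
under eq_bigr do rewrite mulrA. by rewrite sum_delta'.
Qed.

Lemma sliceA_L d1 d2 n m (phi : mor k (tens (d1 + d2) n) (tens (d1 + d2) m)) x2 y2 :
  HA q phi -> HA q (fun a b => phi (merge a x2) (merge b y2)).
Proof.
move=> H p p' hp; apply: funext2 => a b.
rewrite -(comp_tensL (Tpair q p p') phi a x2 b y2) -(comp_tensL' (Tpair q p p') phi a x2 b y2).
by rewrite -!TpairL (H (lshift d2 p) (lshift d2 p')).
Qed.

Lemma sliceA_R d1 d2 n m (phi : mor k (tens (d1 + d2) n) (tens (d1 + d2) m)) x1 y1 :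
  HA q phi -> HA q (fun a b => phi (merge x1 a) (merge y1 b)).
Proof.
move=> H p p' hp; apply: funext2 => a b.
rewrite -(comp_tensR (Tpair q p p') phi x1 a y1 b) -(comp_tensR' (Tpair q p p') phi x1 a y1 b).
by rewrite -!TpairR (H (rshift d1 p) (rshift d1 p')) //= hp addnS.
Qed.

Lemma sliceB_L d1 d2 n m (phi : mor k (tens (d1 + d2) n) (tens (d1 + d2) m)) x2 y2 :
  HB Q q phi -> HB Q q (fun a b => phi (merge a x2) (merge b y2)).
Proof.
move=> [H1 H2]; split; first exact: sliceA_L.
move=> p hp; apply: funext2 => a b.
rewrite -(comp_tensL (Kfac Q p) phi a x2 b y2) -(comp_tensL' (Kfac Q p) phi a x2 b y2).
by rewrite -!KfacL (H2 (lshift d2 p)).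
Qed.

Lemma dec_A d1 d2 n m (phi : mor k (tens (d1 + d2) n) (tens (d1 + d2) m)) :
  HA q phi -> exists s, is_decomp (HA q) (HA q) phi s.
Proof.
move=> H; apply: mor_exists; [exact: HA_closed|exact: HA_closed| |].
  by move=> x2 y2; apply: sliceA_L.
by move=> x1 y1; apply: sliceA_R.
Qed.

Lemma dec_B d1 d2 n m (phi : mor k (tens (d1 + d2) n) (tens (d1 + d2) m)) :
  HB Q q phi -> exists s, is_decomp (HB Q q) (HA q) phi s.
Proof.
move=> H; apply: mor_exists; [exact: HB_closed|exact: HA_closed| |].
  by move=> x2 y2; apply: sliceB_L.
by move=> x1 y1; apply: sliceA_R; case: H.
Qed.

End Slices.


Notation fm F := (@fmor _ _ F _ _).

Definition Ddec (k : fieldType) (Hom1 Hom2 : HomPred k) d1 d2 n m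
  (phi : mor k (tens (d1 + d2) n) (tens (d1 + d2) m)) := exists s, is_decomp Hom1 Hom2 phi s.

Lemma castmor_id (k : fieldType) d n m (f : mor k (tens d n) (tens d m)) : castmor (erefl d) f = f.
Proof.
apply: funext2 => x y; rewrite /castmor.
have E : forall p (z : tens d p), casttup (erefl d) z = z.
  by move=> p z; apply/ffunP => i; rewrite ffunE cast_ord_id.
by rewrite !E.
Qed.

Lemma tens_eval (k : fieldType) d1 d2 n m (phi : mor k (tens (d1 + d2) n) (tens (d1 + d2) m)) s :
  phi = (fun x y => \sum_(p <- s) tensmor p.1 p.2 x y) ->
  forall a1 b1 a2 b2, \sum_(p <- s) p.1 a1 b1 * p.2 a2 b2 = phi (merge a1 a2) (merge b1 b2).
Proof.
move=> -> a1 b1 a2 b2; apply: eq_bigr => p _.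
by rewrite /tensmor !splitL_merge !splitR_merge.
Qed.

Lemma Flin_zero (k : fieldType) (A B C D : finType) (P : mor k A B -> Prop) (Phi : mor k A B -> mor k C D) :
  mclosed P -> mlinear P Phi -> Phi (fun _ _ => 0) = (fun _ _ => 0).
Proof.
move=> [P0 _] L; have := L 1 _ _ P0 P0.
have -> : (fun (_ : A) (_ : B) => 1 * (0:k) + 0) = (fun _ _ => 0).
  by apply: funext2 => a b; rewrite mul1r addr0.
move=> E; apply: funext2 => x y.
have := congr1 (fun f => f x y) E => /=; rewrite mul1r => h.
by apply: (@addrI _ (Phi (fun _ _ => 0) x y)); rewrite addr0 -h.
Qed.

Section ProdF.
Variables (k : fieldType) (Hom1 Hom2 : HomPred k).
Hypothesis C1 : forall d n m, mclosed (@Hom1 d n m).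
Hypothesis C2 : forall d n m, mclosed (@Hom2 d n m).

Definition scl d1 d2 n m (c : k) (p : mor k (tens d1 n) (tens d1 m) * mor k (tens d2 n) (tens d2 m)) :=
  ((fun a b => c * p.1 a b + 0), p.2).

Lemma dec_lin d1 d2 n m c (phi psi : mor k (tens (d1 + d2) n) (tens (d1 + d2) m)) s t :
  is_decomp Hom1 Hom2 phi s -> is_decomp Hom1 Hom2 psi t ->
  is_decomp Hom1 Hom2 (fun x y => c * phi x y + psi x y) (map (@scl d1 d2 n m c) s ++ t).
Proof.
move=> [Hs Es] [Ht Et]; split.
  move=> p hp; case: (In_cat hp) => [hp'|/Ht //].
  case: (In_map hp') => r [/Hs [h1 h2] ->]; split => //=.
  by apply: (C1 _ _ _).2 => //; exact: (C1 _ _ _).1.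
apply: funext2 => x y; rewrite big_cat big_map Es Et; congr (_ + _).
rewrite mulr_sumr; apply: eq_bigr => p _; by rewrite /tensmor /= addr0 mulrA.
Qed.

Lemma dec_zero d1 d2 n m : is_decomp Hom1 Hom2 (fun (_ : tens (d1 + d2) n) (_ : tens (d1 + d2) m) => 0) [::].
Proof. by split => //; apply: funext2 => x y; rewrite big_nil. Qed.

Lemma Ddec_closed d1 d2 n m : mclosed (@Ddec k Hom1 Hom2 d1 d2 n m).
Proof.
split; first by exists [::]; apply: dec_zero.
by move=> c f g [s hs] [t ht]; exists (map (@scl d1 d2 n m c) s ++ t); apply: dec_lin.
Qed.

Variables (d1 d2 : nat) (F : fdata k d1) (G : fdata k d2).
Hypothesis FF : IsFunctor Hom1 F.
Hypothesis FG : IsFunctor Hom2 G.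

Lemma F_lin n m : (0 < n)%N -> (0 < m)%N -> mlinear (@Hom1 d1 n m) (@fmor k d1 F n m).
Proof. by case: FF => L _ _ hn hm c f g hf hg; apply: L. Qed.
Lemma G_lin n m : (0 < n)%N -> (0 < m)%N -> mlinear (@Hom2 d2 n m) (@fmor k d2 G n m).
Proof. by case: FG => L _ _ hn hm c f g hf hg; apply: L. Qed.

Lemma prodF_eq n m (phi : mor k (tens (d1 + d2) n) (tens (d1 + d2) m)) s : (0 < n)%N -> (0 < m)%N -> is_decomp Hom1 Hom2 phi s ->
  fm (prodF Hom1 Hom2 F G) phi = fun x y => \sum_(p <- s) tensm (fm F p.1) (fm G p.2) x y.
Proof.
move=> hn hm hs.
have hs0 := epsilon_spec (inhabits [::]) (is_decomp Hom1 Hom2 phi) (ex_intro _ s hs).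
apply: funext2 => x y; rewrite /= /decomp_of.
move: hs0; set s0 := epsilon _ _ => hs0.
case: hs0 => [H0 E0]; case: hs => [H1 E1].
apply: (mor_indep (C1 d1 n m) (C2 d2 n m) (F_lin hn hm) (G_lin hn hm) H0 H1).
by move=> a1 b1 a2 b2; rewrite (tens_eval E0) (tens_eval E1).
Qed.

Lemma prodF_lin n m : (0 < n)%N -> (0 < m)%N ->
  mlinear (@Ddec k Hom1 Hom2 d1 d2 n m) (@fmor k _ (prodF Hom1 Hom2 F G) n m).
Proof.
move=> hn hm c f g [s hs] [t ht].
rewrite (prodF_eq hn hm (dec_lin c hs ht)) (prodF_eq hn hm hs) (prodF_eq hn hm ht).
apply: funext2 => x y; rewrite big_cat big_map mulr_sumr; congr (_ + _).
apply: big_In => p hp; case: hs => [Hs _]; have [h1 h2] := Hs p hp.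
rewrite /scl /=.
rewrite (F_lin hn hm c h1 (C1 _ _ _).1) (Flin_zero (C1 _ _ _) (F_lin hn hm)).
by rewrite /tensm addr0 mulrA.
Qed.

Hypothesis H1id : forall d n, @Hom1 d n n (@idm k _).
Hypothesis H2id : forall d n, @Hom2 d n n (@idm k _).
Hypothesis H1comp : forall d n m p f g, @Hom1 d n m f -> @Hom1 d m p g -> Hom1 (comp f g).
Hypothesis H2comp : forall d n m p f g, @Hom2 d n m f -> @Hom2 d m p g -> Hom2 (comp f g).

Definition cpair d1 d2 n m p (s : seq (mor k (tens d1 n) (tens d1 m) * mor k (tens d2 n) (tens d2 m)))
  (t : seq (mor k (tens d1 m) (tens d1 p) * mor k (tens d2 m) (tens d2 p))) :=
  flatten (map (fun a => map (fun b => (comp a.1 b.1, comp a.2 b.2)) t) s).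

Lemma dec_comp n m p phi psi s t :
  @is_decomp k Hom1 Hom2 d1 d2 n m phi s -> @is_decomp k Hom1 Hom2 d1 d2 m p psi t ->
  is_decomp Hom1 Hom2 (comp phi psi) (cpair s t).
Proof.
move=> [Hs Es] [Ht Et]; split.
  move=> r hr; case: (In_flatten hr) => u [hu hr'].
  case: (In_map hu) => a [ha ->] in hr'; case: (In_map hr') => b [hb ->].
  have [a1 a2] := Hs a ha; have [b1 b2] := Ht b hb.
  by split; [apply: H1comp|apply: H2comp].
rewrite Es Et comp_suml; apply: funext2 => x y; rewrite big_flatten big_map.
apply: eq_bigr => a _; rewrite comp_sumr big_map; apply: eq_bigr => b _.
by rewrite comp_tensmor.
Qed.

Lemma prodF_functor (HomX : HomPred k) :
  (forall n m phi, (0 < n)%N -> (0 < m)%N -> @HomX (d1 + d2) n m phi -> Ddec Hom1 Hom2 phi) ->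
  IsFunctor HomX (prodF Hom1 Hom2 F G).
Proof.
move=> HX; split.
- move=> n m c f g hn hm hf hg.
  have [s hs] := HX _ _ _ hn hm hf; have [t ht] := HX _ _ _ hn hm hg.
  by apply: (prodF_lin hn hm); [exists s|exists t].
- move=> n hn.
  have hd : is_decomp Hom1 Hom2 (@idm k (tens (d1 + d2) n)) [:: (@idm k _, @idm k _)].
    split; first by move=> p [<-|//]; split.
    by apply: funext2 => x y; rewrite big_seq1 tensmor_id.
  rewrite (prodF_eq hn hn hd); apply: funext2 => x y; rewrite big_seq1 /=.
  have [_ Fid _] := FF; have [_ Gid _] := FG.
  by rewrite /= (Fid n hn) (Gid n hn) tensm_id.
- move=> n m p f g hn hm hp hf hg.
  have [s hs] := HX _ _ _ hn hm hf; have [t ht] := HX _ _ _ hm hp hg.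
  rewrite (prodF_eq hn hp (dec_comp hs ht)) (prodF_eq hn hm hs) (prodF_eq hm hp ht).
  rewrite comp_suml; apply: funext2 => x y; rewrite big_flatten big_map.
  apply: big_In => a ha; rewrite comp_sumr big_map; apply: big_In => b hb.
  case: hs => [Hs _]; case: ht => [Ht _]; have [a1 a2] := Hs a ha; have [b1 b2] := Ht b hb.
  rewrite comp_tensm /=.
  have [_ _ Fc] := FF; have [_ _ Gc] := FG.
  by rewrite (Fc _ _ _ _ _ hn hm hp a1 b1) (Gc _ _ _ _ _ hn hm hp a2 b2).
Qed.

End ProdF.

Section NatProd.
Variables (k : fieldType) (Hom1 Hom2 HomX : HomPred k).
Hypothesis C1 : forall d n m, mclosed (@Hom1 d n m).
Hypothesis C2 : forall d n m, mclosed (@Hom2 d n m).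
Variables (d1 d2 : nat) (F F' : fdata k d1) (G G' : fdata k d2).
Hypotheses (FF : IsFunctor Hom1 F) (FF' : IsFunctor Hom1 F') (FG : IsFunctor Hom2 G) (FG' : IsFunctor Hom2 G').
Hypothesis HX : forall n m phi, (0 < n)%N -> (0 < m)%N -> @HomX (d1 + d2) n m phi -> Ddec Hom1 Hom2 phi.

Lemma nprod_nat (f : ntrans F F') (g : ntrans G G') :
  IsNat Hom1 f -> IsNat Hom2 g -> IsNat HomX (nprod (Hom1:=Hom1) (Hom2:=Hom2) f g).
Proof.
move=> Nf Ng n m phi hn hm hphi; rewrite castmor_id.
have [s hs] := HX hn hm hphi.
rewrite (prodF_eq C1 C2 FF FG hn hm hs) (prodF_eq C1 C2 FF' FG' hn hm hs).
rewrite comp_suml comp_sumr; apply: funext2 => x y; apply: big_In => p hp.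
have [h1 h2] := hs.1 p hp.
rewrite /nprod !comp_tensm.
have := Nf n m p.1 hn hm h1; rewrite castmor_id => ->.
by have := Ng n m p.2 hn hm h2; rewrite castmor_id => ->.
Qed.

End NatProd.




Lemma sum_single (k : fieldType) (T : finType) (t0 : T) (h : forall t, t = t0) (F : T -> k) :
  \sum_(t : T) F t = F t0.
Proof. rewrite (bigD1 t0) //= big1 ?addr0 // => t; by rewrite (h t) eqxx. Qed.

Definition t0 n : tens 0 n := [ffun i : 'I_0 => Ordinal (leq_trans (ltn_ord i) (leq0n n))].
Lemma tens0_eq n (x : tens 0 n) : x = t0 n.
Proof. by apply/ffunP => [[]]. Qed.
Lemma unit_eq (x : unit) : x = tt.
Proof. by case: x. Qed.

Lemma comp_iso_l (k : fieldType) (A B C : finType) (al : A -> B) (h : mor k B C) :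
  comp (fun x z => (z == al x)%:R) h = fun x y => h (al x) y.
Proof.
apply: funext2 => x y; rewrite /comp -[RHS](sum_delta (al x) (fun z => h z y)).
by apply: eq_bigr => z _; rewrite eq_sym.
Qed.

Lemma comp_iso_r (k : fieldType) (A B C : finType) (al : B -> C) (be : C -> B) (h : mor k A B) :
  cancel al be -> cancel be al ->
  comp h (fun z y => (y == al z)%:R) = fun x y => h x (be y).
Proof.
move=> K1 K2; apply: funext2 => x y; rewrite /comp -[RHS](sum_delta' (be y) (fun z => h x z)).
apply: eq_bigr => z _; congr (_ * _%:R); congr (nat_of_bool _).
by apply/eqP/eqP => ->; rewrite ?K1 ?K2.
Qed.

Lemma mclosed_sum (k : fieldType) (A B : finType) (X : Type) (P : mor k A B -> Prop) (s : seq X)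
  (c : X -> k) (f : X -> mor k A B) :
  mclosed P -> (forall p, List.In p s -> P (f p)) -> P (fun x y => \sum_(p <- s) c p * f p x y).
Proof.
move=> [P0 PL]; elim: s => [|p s IH] H.
  by have -> : (fun (x : A) (y : B) => \sum_(p <- [::]) c p * f p x y) = (fun _ _ => 0)
    by apply: funext2 => x y; rewrite big_nil.
have -> : (fun x y => \sum_(r <- p :: s) c r * f r x y) =
          (fun x y => c p * f p x y + \sum_(r <- s) c r * f r x y)
  by apply: funext2 => x y; rewrite big_cons.
apply: PL; first by apply: H; left.
by apply: IH => r hr; apply: H; right.
Qed.

Lemma HB_cast (k : fieldType) (Q q : k) d d' (h : d = d') n m (phi : mor k (tens d' n) (tens d' m)) :
  HB Q q phi -> HB Q q (castmor h phi).
Proof. by case: d' / h phi => phi; rewrite castmor_id. Qed.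

Section Idx2.
Variables (e d1 d2 n : nat).
Let h := addnA e d1 d2.
Lemma castA_LL (x : tens (e + (d1 + d2)) n) : splitL (splitL (casttup h x)) = splitL x.
Proof. by apply/ffunP => i; rewrite !ffunE; congr (x _); apply: val_inj. Qed.
Lemma castA_RL (x : tens (e + (d1 + d2)) n) : splitR (splitL (casttup h x)) = splitL (splitR x).
Proof. by apply/ffunP => i; rewrite !ffunE; congr (x _); apply: val_inj. Qed.
Lemma castA_R (x : tens (e + (d1 + d2)) n) : splitR (casttup h x) = splitR (splitR x).
Proof. by apply/ffunP => i; rewrite !ffunE; congr (x _); apply: val_inj => /=; rewrite addnA. Qed.
End Idx2.

Lemma cast0 e n (x : tens (e + 0) n) : casttup (addn0 e) x = splitL x.
Proof. by apply/ffunP => i; rewrite !ffunE; congr (x _); apply: val_inj. Qed.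
Lemma cast0' e n (x : tens e n) : splitL (casttup (esym (addn0 e)) x) = x.
Proof. by apply/ffunP => i; rewrite !ffunE; congr (x _); apply: val_inj. Qed.

Section Unit.
Variables (k : fieldType) (q : k).

Lemma unit_fmor n m (f : mor k (tens 0 n) (tens 0 m)) x y :
  fm (unitAP k) f x y = f (t0 n) (t0 m).
Proof. by rewrite /= (sum_single (@tens0_eq n)) (sum_single (@tens0_eq m)). Qed.

Lemma unit_functor : IsFunctor (HA q) (unitAP k).
Proof.
split.
- move=> n m c f g _ _ _ _; apply: funext2 => x y; by rewrite !unit_fmor.
- move=> n _; apply: funext2 => x y; rewrite unit_fmor /idm eqxx.
  by rewrite (unit_eq x) (unit_eq y) eqxx.
- move=> n m p f g _ _ _ _ _; apply: funext2 => x y.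
  rewrite unit_fmor /comp (sum_single (@tens0_eq m)) (sum_single unit_eq).
  by rewrite !unit_fmor.
Qed.
End Unit.


Section Main.
Variables (k : fieldType) (Q q : k).

Let CA := @HA_closed k q.
Let CB := @HB_closed k Q q.

Lemma tensAP_functor d e (F : fdata k d) (G : fdata k e) :
  IsFunctor (HA q) F -> IsFunctor (HA q) G -> IsFunctor (HA q) (tensAP q F G).
Proof.
move=> FF FG.
apply: (prodF_functor CA CA FF FG (@HA_id k q) (@HA_id k q) (@HA_comp k q) (@HA_comp k q)).
by move=> n m phi _ _ hphi; apply: dec_A.
Qed.

Lemma actP_functor e d (G : fdata k e) (F : fdata k d) :
  IsFunctor (HB Q q) G -> IsFunctor (HA q) F -> IsFunctor (HB Q q) (actP Q q G F).
Proof.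
move=> FG FF.
apply: (prodF_functor CB CA FG FF (@HB_id k Q q) (@HA_id k q) (@HB_comp k Q q) (@HA_comp k q)).
by move=> n m phi _ _ hphi; apply: dec_B.
Qed.

Lemma nact_nat e d (G G' : fdata k e) (F F' : fdata k d) (f : ntrans G G') (g : ntrans F F') :
  IsFunctor (HB Q q) G -> IsFunctor (HB Q q) G' ->
  IsFunctor (HA q) F -> IsFunctor (HA q) F' ->
  IsNat (HB Q q) f -> IsNat (HA q) g -> IsNat (HB Q q) (nact Q q f g).
Proof.
move=> FG FG' FF FF' Nf Ng.
apply: (nprod_nat CB CA FG FG' FF FF' _ Nf Ng).
by move=> n m phi _ _ hphi; apply: dec_B.
Qed.

Lemma validB d1 d2 n m (psi : mor k (tens (d1 + d2) n) (tens (d1 + d2) m)) :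
  HB Q q psi -> is_decomp (HB Q q) (HA q) psi (decomp_of (HB Q q) (HA q) psi).
Proof.
move=> hpsi; have [s hs] := dec_B hpsi.
exact: (epsilon_spec (inhabits [::]) _ (ex_intro _ s hs)).
Qed.

Lemma validA d1 d2 n m (psi : mor k (tens (d1 + d2) n) (tens (d1 + d2) m)) :
  HA q psi -> is_decomp (HA q) (HA q) psi (decomp_of (HA q) (HA q) psi).
Proof.
move=> hpsi; have [s hs] := dec_A hpsi.
exact: (epsilon_spec (inhabits [::]) _ (ex_intro _ s hs)).
Qed.

Lemma comp_lam_r e d1 d2 (Y : fdata k e) (X1 : fdata k d1) (X2 : fdata k d2) m (A : finType)
  (hh : mor k A (fob (actP Q q Y (tensAP q X1 X2)) m)) :
  comp hh (lam Q q Y X1 X2 m) = fun x y => hh x (y.1.1, (y.1.2, y.2)).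
Proof.
apply: (comp_iso_r (al := fun x : (fob Y m * (fob X1 m * fob X2 m))%type => ((x.1, x.2.1), x.2.2))).
  by case=> a [b c].
by case=> [[a b] c].
Qed.

Lemma comp_lam_l e d1 d2 (Y : fdata k e) (X1 : fdata k d1) (X2 : fdata k d2) n (A : finType)
  (hh : mor k (fob (actP Q q (actP Q q Y X1) X2) n) A) :
  comp (lam Q q Y X1 X2 n) hh = fun x y => hh ((x.1, x.2.1), x.2.2) y.
Proof. exact: comp_iso_l. Qed.

End Main.


Section Lam.
Variables (k : fieldType) (Q q : k).

Lemma lam_nat e d1 d2 (Y : fdata k e) (X1 : fdata k d1) (X2 : fdata k d2) :
  IsFunctor (HB Q q) Y -> IsFunctor (HA q) X1 -> IsFunctor (HA q) X2 ->
  IsNatC (HB Q q) (addnA e d1 d2) (actP Q q Y (tensAP q X1 X2))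
       (actP Q q (actP Q q Y X1) X2) (lam Q q Y X1 X2).
Proof.
move=> FY F1 F2 n m phi hn hm hphi.
have hs := validB hphi.
set s := decomp_of (HB Q q) (HA q) phi in hs.
pose u := flatten (map (fun p => map (fun r => (r.1, tensmor r.2 p.2))
             (decomp_of (HB Q q) (HA q) p.1)) s).
have Hu : forall r, List.In r u -> HB Q q r.1 /\ Ddec (HA q) (HA q) r.2.
  move=> r hr; case: (In_flatten hr) => w [hw hr'].
  case: (In_map hw) => p [hp E]; rewrite E in hr'.
  case: (In_map hr') => r' [hr'' ->].
  have [hp1 hp2] := hs.1 p hp; have [h1 h2] := (validB hp1).1 r' hr''.
  split => //; exists [:: (r'.2, p.2)]; split; first by move=> z [<-|//].
  by apply: funext2 => x y; rewrite big_seq1.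
have Eu : castmor (addnA e d1 d2) phi = fun x y => \sum_(r <- u) tensmor r.1 r.2 x y.
  apply: funext2 => x y; rewrite /castmor {1}hs.2 big_flatten big_map.
  apply: big_In => p hp; rewrite big_map.
  have [hp1 hp2] := hs.1 p hp.
  unfold tensmor at 1; rewrite {1}(validB hp1).2 /= mulr_suml.
  apply: eq_bigr => r _; rewrite /tensmor (castA_LL x) (castA_LL y) (castA_RL x) (castA_RL y) (castA_R x) (castA_R y).
  by rewrite mulrA.
have hpsi := HB_cast (addnA e d1 d2) hphi.
have hs0 := validB hpsi.
have Key : fm (actP Q q Y (tensAP q X1 X2)) (castmor (addnA e d1 d2) phi) =
    fun x y => \sum_(r <- u) tensm (fm Y r.1) (fm (tensAP q X1 X2) r.2) x y.
  have H0 : forall p, List.In p (decomp_of (HB Q q) (HA q) (castmor (addnA e d1 d2) phi)) ->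
      HB Q q p.1 /\ Ddec (HA q) (HA q) p.2.
    by move=> p hp; have [h1 h2] := hs0.1 p hp; split => //; apply: dec_A.
  have E : forall a1 b1 a2 b2,
      \sum_(p <- decomp_of (HB Q q) (HA q) (castmor (addnA e d1 d2) phi)) p.1 a1 b1 * p.2 a2 b2 =
      \sum_(p <- u) p.1 a1 b1 * p.2 a2 b2.
    by move=> a1 b1 a2 b2; rewrite (tens_eval hs0.2) (tens_eval Eu).
  apply: funext2 => x y.
  exact: (mor_indep (@HB_closed k Q q e n m) (Ddec_closed (HA q) (@HA_closed k q) d1 d2 n m)
     (F_lin FY hn hm) (prodF_lin (@HA_closed k q) (@HA_closed k q) F1 F2 hn hm) H0 Hu E x.1 y.1 x.2 y.2).
rewrite Key comp_lam_r comp_lam_l; apply: funext2 => x y /=.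
rewrite big_flatten big_map; apply: big_In => p hp; rewrite big_map /tensm /= mulr_suml.
have [hp1 hp2] := hs.1 p hp.
apply: big_In => r hr; have [h1 h2] := (validB hp1).1 r hr.
have hd : is_decomp (HA q) (HA q) (tensmor r.2 p.2) [:: (r.2, p.2)].
  split; first by move=> z [<-|//].
  by apply: funext2 => a b; rewrite big_seq1.
have := congr1 (fun f => f x.2 (y.1.2, y.2))
  (prodF_eq (@HA_closed k q) (@HA_closed k q) F1 F2 hn hm hd).
rewrite /= big_seq1 /tensm /= => ->.
by rewrite mulrA.
Qed.

End Lam.


Section Rho.
Variables (k : fieldType) (Q q : k).

Lemma comp_rho_r e (Y : fdata k e) m (A : finType) (hh : mor k A (fob (actP Q q Y (unitAP k)) m)) :
  comp hh (rho Q q Y m) = fun x y => hh x (y, tt).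
Proof.
apply: (comp_iso_r (al := fun x : (fob Y m * unit)%type => x.1)); first by case=> a [].
by [].
Qed.

Lemma comp_rho_l e (Y : fdata k e) n (A : finType) (hh : mor k (fob Y n) A) :
  comp (rho Q q Y n) hh = fun x y => hh x.1 y.
Proof. exact: comp_iso_l. Qed.

Definition rinv e (Y : fdata k e) : ntrans Y (actP Q q Y (unitAP k)) :=
  fun n y x => (x == (y, tt))%:R.
Arguments rinv {e} Y n _ _.

Lemma comp_rinv_r e (Y : fdata k e) m (A : finType) (hh : mor k A (fob Y m)) :
  comp hh (rinv Y m) = fun x y => hh x y.1.
Proof.
apply: (comp_iso_r (al := fun x : fob Y m => (x, tt))); first by [].
by case=> a [].
Qed.

Lemma comp_rinv_l e (Y : fdata k e) n (A : finType) (hh : mor k (fob (actP Q q Y (unitAP k)) n) A) :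
  comp (rinv Y n) hh = fun x y => hh (x, tt) y.
Proof. exact: comp_iso_l. Qed.

Lemma castmor0 e n m (f : mor k (tens e n) (tens e m)) :
  castmor (addn0 e) f = tensmor f (fun (_ : tens 0 n) (_ : tens 0 m) => 1).
Proof. by apply: funext2 => x y; rewrite /castmor /tensmor !cast0 mulr1. Qed.

Lemma castmor0' e n m (g : mor k (tens e n) (tens e m)) :
  castmor (esym (addn0 e)) (tensmor g (fun (_ : tens 0 n) (_ : tens 0 m) => 1)) = g.
Proof. by apply: funext2 => x y; rewrite /castmor /tensmor !cast0' mulr1. Qed.

Lemma dec_one e n m (f : mor k (tens e n) (tens e m)) :
  HB Q q f -> is_decomp (HB Q q) (HA q) (tensmor f (fun (_ : tens 0 n) (_ : tens 0 m) => 1)) [:: (f, fun _ _ => 1)].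
Proof.
move=> hf; split; first by move=> z [<-|//]; split => //; apply: HA0.
by apply: funext2 => a b; rewrite big_seq1.
Qed.

Lemma rho_nat e (Y : fdata k e) :
  IsFunctor (HB Q q) Y -> IsNatC (HB Q q) (addn0 e) (actP Q q Y (unitAP k)) Y (rho Q q Y).
Proof.
move=> FY n m f hn hm hf; rewrite castmor0.
rewrite (prodF_eq (@HB_closed k Q q) (@HA_closed k q) FY (unit_functor q) hn hm (dec_one hf)).
rewrite comp_rho_r comp_rho_l; apply: funext2 => x y.
by rewrite big_seq1 /tensm unit_fmor mulr1.
Qed.

Lemma rinv_nat e (Y : fdata k e) :
  IsFunctor (HB Q q) Y -> IsNatC (HB Q q) (esym (addn0 e)) Y (actP Q q Y (unitAP k)) (rinv Y).
Proof.
move=> FY n m f hn hm hf.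
have hs := validB hf; set s := decomp_of _ _ f in hs.
pose g := fun x y => \sum_(p <- s) p.2 (t0 n) (t0 m) * p.1 x y.
have hg : HB Q q g.
  apply: mclosed_sum; first exact: HB_closed.
  by move=> p hp; case: (hs.1 p hp).
have Ef : f = tensmor g (fun (_ : tens 0 n) (_ : tens 0 m) => 1).
  apply: funext2 => x y; rewrite {1}hs.2 /tensmor mulr1 /g; apply: eq_bigr => p _.
  by rewrite mulrC /tensmor (tens0_eq (splitR x)) (tens0_eq (splitR y)).
rewrite Ef castmor0'.
rewrite (prodF_eq (@HB_closed k Q q) (@HA_closed k q) FY (unit_functor q) hn hm (dec_one hg)).
rewrite comp_rinv_r comp_rinv_l; apply: funext2 => x y.
by rewrite big_seq1 /tensm unit_fmor mulr1.
Qed.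

End Rho.


Theorem theorem4p2 (k : fieldType) (Q q : k) (hQ : Q != 0) (hq : q != 0) :
  (* presupposed monoidal structure of AP_q: unit and (x) land in AP_q *)
  IsFunctor (HA q) (unitAP k) /\
  (forall (d e : nat) (F : fdata k d) (G : fdata k e),
     IsFunctor (HA q) F -> IsFunctor (HA q) G -> IsFunctor (HA q) (tensAP q F G)) /\
  (* * is a functor P_{Q,q} x AP_q -> P_{Q,q} : on objects *)
  (forall (e d : nat) (G : fdata k e) (F : fdata k d),
     IsFunctor (HB Q q) G -> IsFunctor (HA q) F -> IsFunctor (HB Q q) (actP Q q G F)) /\
  (* on morphisms *)
  (forall (e d : nat) (G G' : fdata k e) (F F' : fdata k d)
     (f : ntrans G G') (g : ntrans F F'),
     IsFunctor (HB Q q) G -> IsFunctor (HB Q q) G' ->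
     IsFunctor (HA q) F -> IsFunctor (HA q) F' ->
     IsNat (HB Q q) f -> IsNat (HA q) g ->
     IsNat (HB Q q) (nact Q q f g)) /\
  (* identities *)
  (forall (e d : nat) (G : fdata k e) (F : fdata k d),
     IsFunctor (HB Q q) G -> IsFunctor (HA q) F ->
     forall n : nat, (0 < n)%N -> nact Q q (nid G) (nid F) n = nid (actP Q q G F) n) /\
  (* axiom (1) *)
  (forall (e d : nat) (Y1 Y2 Y3 : fdata k e) (X1 X2 X3 : fdata k d)
     (f1 : ntrans Y2 Y3) (f2 : ntrans Y1 Y2) (g1 : ntrans X2 X3) (g2 : ntrans X1 X2),
     IsFunctor (HB Q q) Y1 -> IsFunctor (HB Q q) Y2 -> IsFunctor (HB Q q) Y3 ->
     IsFunctor (HA q) X1 -> IsFunctor (HA q) X2 -> IsFunctor (HA q) X3 ->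
     IsNat (HB Q q) f1 -> IsNat (HB Q q) f2 -> IsNat (HA q) g1 -> IsNat (HA q) g2 ->
     forall n : nat, (0 < n)%N ->
       nact Q q (ncomp f1 f2) (ncomp g1 g2) n =
       ncomp (nact Q q f1 g1) (nact Q q f2 g2) n) /\
  (* axiom (2): lambda is a natural morphism ... *)
  (forall (e d1 d2 : nat) (Y : fdata k e) (X1 : fdata k d1) (X2 : fdata k d2),
     IsFunctor (HB Q q) Y -> IsFunctor (HA q) X1 -> IsFunctor (HA q) X2 ->
     IsNatC (HB Q q) (addnA e d1 d2) (actP Q q Y (tensAP q X1 X2))
       (actP Q q (actP Q q Y X1) X2) (lam Q q Y X1 X2)) /\
  (forall (e d1 d2 : nat) (Y Y' : fdata k e) (X1 X1' : fdata k d1)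
     (X2 X2' : fdata k d2) (f : ntrans Y Y') (g1 : ntrans X1 X1') (g2 : ntrans X2 X2'),
     IsFunctor (HB Q q) Y -> IsFunctor (HB Q q) Y' ->
     IsFunctor (HA q) X1 -> IsFunctor (HA q) X1' ->
     IsFunctor (HA q) X2 -> IsFunctor (HA q) X2' ->
     IsNat (HB Q q) f -> IsNat (HA q) g1 -> IsNat (HA q) g2 ->
     forall n : nat, (0 < n)%N ->
       ncomp (lam Q q Y' X1' X2') (nact Q q f (ntens q g1 g2)) n =
       ncomp (nact Q q (nact Q q f g1) g2) (lam Q q Y X1 X2) n) /\
  (* ... satisfying the coherence condition of (2) *)
  (forall (e d1 d2 d3 : nat) (Y : fdata k e) (X1 : fdata k d1) (X2 : fdata k d2)
     (X3 : fdata k d3),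
     IsFunctor (HB Q q) Y -> IsFunctor (HA q) X1 -> IsFunctor (HA q) X2 ->
     IsFunctor (HA q) X3 ->
     forall n : nat, (0 < n)%N ->
       ncomp (nact Q q (lam Q q Y X1 X2) (nid X3)) (lam Q q Y (tensAP q X1 X2) X3) n =
       ncomp (lam Q q (actP Q q Y X1) X2 X3)
         (ncomp (lam Q q Y X1 (tensAP q X2 X3))
                (nact Q q (nid Y) (assocAP q X1 X2 X3))) n) /\
  (* axiom (3): rho is a natural isomorphism ... *)
  (forall (e : nat) (Y : fdata k e),
     IsFunctor (HB Q q) Y ->
     IsNatC (HB Q q) (addn0 e) (actP Q q Y (unitAP k)) Y (rho Q q Y) /\
     exists rinv : ntrans Y (actP Q q Y (unitAP k)),
       IsNatC (HB Q q) (esym (addn0 e)) Y (actP Q q Y (unitAP k)) rinv /\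
       (forall n : nat, (0 < n)%N ->
          ncomp rinv (rho Q q Y) n = nid (actP Q q Y (unitAP k)) n /\
          ncomp (rho Q q Y) rinv n = nid Y n)) /\
  (forall (e : nat) (Y Y' : fdata k e) (f : ntrans Y Y'),
     IsFunctor (HB Q q) Y -> IsFunctor (HB Q q) Y' -> IsNat (HB Q q) f ->
     forall n : nat, (0 < n)%N ->
       ncomp (rho Q q Y') (nact Q q f (nid (unitAP k))) n =
       ncomp f (rho Q q Y) n) /\
  (* ... satisfying the triangle condition of (3) *)
  (forall (e d : nat) (Y : fdata k e) (X : fdata k d),
     IsFunctor (HB Q q) Y -> IsFunctor (HA q) X ->
     forall n : nat, (0 < n)%N ->
       ncomp (nact Q q (rho Q q Y) (nid X)) (lam Q q Y (unitAP k) X) n =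
       nact Q q (nid Y) (lunitAP q X) n).
Proof.
have CA := @HA_closed k q; have CB := @HB_closed k Q q.
split; first exact: unit_functor.
split; first by move=> d e F G; apply: tensAP_functor.
split; first by move=> e d G F; apply: actP_functor.
split; first by move=> *; apply: nact_nat.
split.
  move=> e d G F _ _ n _; apply: funext2 => x y.
  by rewrite /nact /nprod /nid tensm_id.
split.
  move=> *; rewrite /nact /nprod /ncomp; by rewrite comp_tensm.
split; first by move=> *; apply: lam_nat.
split.
  move=> *; rewrite /ncomp comp_lam_r comp_lam_l; apply: funext2 => x y.
  by rewrite /nact /nprod /ntens /tensm /= mulrA.
split.
  move=> e d1 d2 d3 Y X1 X2 X3 _ _ _ _ n _.
  rewrite /ncomp !comp_lam_r comp_lam_l; apply: funext2 => x y.
  case: x => x1 [[x2 x3] x4]; case: y => [[[y1 y2] y3] y4].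
  rewrite /nact /nprod /nid /tensm /idm /lam /assocAP /=.
  by rewrite -!natrM !mulnb !xpair_eqE (eq_sym x4) (eq_sym x1) !andbA.
split.
  move=> e Y FY; split; first exact: rho_nat.
  exists (@rinv k Q q e Y); split; first exact: rinv_nat.
  move=> n _; split.
    rewrite /ncomp comp_rho_l; apply: funext2 => x y.
    by rewrite /rinv /nid /idm; case: x => a []; rewrite eq_sym.
  rewrite /ncomp comp_rinv_l; apply: funext2 => x y.
  by rewrite /rho /nid /idm eq_sym.
split.
  move=> e Y Y' f _ _ _ n _; rewrite /ncomp comp_rho_r comp_rho_l; apply: funext2 => x y.
  by case: x => a []; rewrite /nact /nprod /nid /tensm /idm /= mulr1.
move=> e d Y X _ _ n _; rewrite /ncomp comp_lam_l; apply: funext2 => x y.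
by rewrite /nact /nprod /nid /tensm /idm /rho /lunitAP /= !(eq_sym y.1) !(eq_sym y.2).
Qed.
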